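(* Let $(\mathfrak m,I)$ be a non--degenerate pseudo--complex fundamental graded Lie algebra of $l$-th type with Tanaka prolongation $\mathfrak g=\bigoplus_{i\ge-l}\mathfrak g_i$, and let $\phi(\mathfrak m)\subset\mathfrak n\cong\mathbb{C}^N$ be the corresponding standard real submanifold. For every $X\in\mathfrak g_j$, the infinitesimal CR automorphism of $\phi(\mathfrak m)$ corresponding to $X$ is a weighted homogeneous holomorphic vector field on $\mathbb{C}^N=\mathfrak n$ of weighted degree $j$.
   Context: $(\mathfrak m,I)$: $\mathfrak m=\mathfrak g_{-l}\oplus\dots\oplus\mathfrak g_{-1}$ a real graded Lie algebra generated by $\mathfrak g_{-1}$, $\mathfrak g_{-l}\ne0$, bracket $\mathfrak g_{-1}\times\mathfrak g_{-1}\to\mathfrak g_{-2}$ nondegenerate, $I$ a complex structure on $\mathfrak g_{-1}$ with $[IX,IY]=[X,Y]$. Tanaka prolongation: $\mathfrak g_0$ = grading-preserving derivations of $\mathfrak m$ commuting with $I$ on $\mathfrak g_{-1}$; for $i>0$, $\mathfrak g_i=\{f\in\bigoplus_{j<0}\mathfrak g_j^*\otimes\mathfrak g_{j+i}:f([X,Y])=[f(X),Y]+[X,f(Y)]\ \forall X,Y\in\mathfrak m\}$; this is a finite-dimensional graded Lie algebra containing $\mathfrak m$ as its negative part. With $\mathfrak g_{-1}^{10}=\{X-iIX\}$, $\mathfrak g_{-1}^{01}=\{X+iIX\}$, $\mathfrak n=(\mathfrak g_{-l}\oplus\dots\oplus\mathfrak g_{-2})\otimes\mathbb{C}\oplus\mathfrak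 g_{-1}^{10}$, the standard real submanifold is $\phi(\mathfrak m)$, $\phi(X)=\exp^{-1}(\exp(X)\exp(-\tfrac12(X_{-1}+iIX_{-1})))$, i.e. the inclusion $\exp(\mathfrak m)\subset\exp(\mathfrak n)$ of nilpotent groups in exponential coordinates. The infinitesimal CR automorphism corresponding to $X\in\mathfrak g$ is the holomorphic vector field on $\exp(\mathfrak n)$ whose value at $\exp(Y)$, $Y\in\mathfrak n$, in the left-invariant trivialization $T\exp(\mathfrak n)\cong\mathfrak n$, is $(\mathrm{Ad}(\exp(-Y))X)_{\mathfrak n}$, the component in $\mathfrak m\otimes\mathbb{C}$ projected to $\mathfrak n$ along $\mathfrak g_{-1}^{01}$ (written in exponential coordinates). Weights: coordinates on $\mathfrak g_{-j}\otimes\mathbb{C}$ (resp. $\mathfrak g_{-1}^{10}$) have weight $j$, the corresponding coordinate vector fields weight $-j$; a field $\sum f_u\,\partial_u$ is weighted homogeneous of degree $d$ if each $f_u$ is weighted homogeneous of degree $d+[u]$. *)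

(* Defs.v *)
From HB Require Import structures.
From mathcomp Require Import all_boot all_order all_algebra.
From mathcomp Require Import complex.
Set Implicit Arguments. Unset Strict Implicit. Unset Printing Implicit Defensive.
Import Order.TTheory GRing.Theory Num.Theory.
Local Open Scope ring_scope.

(* m is the real vector space V = 'rV[R]_n written in a basis adapted to the  *)
(* grading: the i-th basis vector lies in g_{-(deg i)}.  The bracket is br,   *)
(* the complex structure on g_{-1} is (the restriction of) I.                 *)
Section Defs.
Variables (R : rcfType) (n : nat).
Local Notation V := 'rV[R]_n.
Local Notation C := (R[i]).
Local Notation VC := 'rV[C]_n.

Definition hom (deg : 'I_n -> nat) (k : nat) (X : V) : Prop :=
  forall j, X ord0 j != 0 -> deg j = k.

Definition nondeg_pseudo_complex_FGLA (l : nat) (deg : 'I_n -> nat)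
    (br : V -> V -> V) (I : V -> V) : Prop :=
  [/\
      (forall j, (1 <= deg j <= l)%N) /\ (exists j, deg j = l),
      [/\ (forall a X Y Z, br (a *: X + Y) Z = a *: br X Z + br Y Z),
          (forall a X Y Z, br X (a *: Y + Z) = a *: br X Y + br X Z),
          (forall X Y, br X Y = - br Y X) &
          (forall X Y Z, br X (br Y Z) + br Y (br Z X) + br Z (br X Y) = 0)],
      (forall a b X Y, hom deg a X -> hom deg b Y -> hom deg (a + b) (br X Y)),
      (forall S : V -> Prop, S 0 ->
         (forall a X Y, S X -> S Y -> S (a *: X + Y)) ->
         (forall X Y, S X -> S Y -> S (br X Y)) ->
         (forall X, hom deg 1 X -> S X) -> forall X, S X) &
      (forall X, hom deg 1 X -> (forall Y, hom deg 1 Y -> br X Y = 0) -> X = 0) /\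
      [/\ (forall a X Y, I (a *: X + Y) = a *: I X + I Y),
          (forall X, hom deg 1 X -> hom deg 1 (I X)),
          (forall X, hom deg 1 X -> I (I X) = - X) &
          (forall X Y, hom deg 1 X -> hom deg 1 Y -> br (I X) (I Y) = br X Y)]].

(* Tanaka prolongation.  An element Z of g (of any degree) is encoded by the  *)
(* map  [Y1; ...; Yr] |-> m-component of [...[[Z,Y1],Y2],...,Yr]  (Yi in m). *)
(* For Z in m this is ev Z; for Z = f in g_i, i >= 0 (a map f : m -> g with   *)
(* [f, Y] = f(Y)), the value on Y :: s is the encoding of f(Y) evaluated at s *)
(* and the value on [::] is 0.  In this encoding [Z, Y] is "shift Y".         *)
Definition Rep := seq V -> V.

Definition ev (br : V -> V -> V) (X : V) : Rep := fun s => foldl br X s.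
Definition shift (Y : V) (P : Rep) : Rep := fun s => P (Y :: s).

Definition encD (br : V -> V -> V) (D : V -> V) : Rep :=
  fun s => match s with [::] => 0 | Y :: s' => ev br (D Y) s' end.

Definition gneg (deg : 'I_n -> nat) (br : V -> V -> V) (a : nat) (P : Rep) :=
  exists X, hom deg a X /\ P = ev br X.

Definition g0 (deg : 'I_n -> nat) (br : V -> V -> V) (I : V -> V) (P : Rep) :=
  exists D : V -> V,
    [/\ (forall a X Y, D (a *: X + Y) = a *: D X + D Y),
        (forall k X, hom deg k X -> hom deg k (D X)),
        (forall X Y, D (br X Y) = br (D X) Y + br X (D Y)),
        (forall X, hom deg 1 X -> D (I X) = I (D X)) &
        P = encD br D].

(* gle i k P  (used with k <= i) : P is (the encoding of) an element of g_k *)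
Fixpoint gle (deg : 'I_n -> nat) (br : V -> V -> V) (I : V -> V) (i : nat)
    : nat -> Rep -> Prop :=
  match i with
  | 0 => fun _ P => g0 deg br I P
  | i'.+1 => fun k P =>
      if (k <= i')%N then gle deg br I i' k P else
      [/\ P [::] = 0,
          (forall a Y Z s, P ((a *: Y + Z) :: s) = a *: P (Y :: s) + P (Z :: s)),
          (forall a Y, (0 < a)%N -> hom deg a Y ->
             if (a <= k)%N then gle deg br I i' (k - a) (shift Y P)
             else gneg deg br (a - k) (shift Y P)) &
          (* f([X,Y]) = [f(X),Y] + [X,f(Y)] *)
          (forall X Y s, P (br X Y :: s) = P (X :: Y :: s) - P (Y :: X :: s))]
  end.

Definition gdeg (deg : 'I_n -> nat) (br : V -> V -> V) (I : V -> V) (j : int)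
    (P : Rep) : Prop :=
  match j with
  | Posz k => gle deg br I k k P
  | Negz k => gneg deg br k.+1 P
  end.

(* Complexification m (x) C = 'rV[C]_n and n = g_{<=-2}(x)C + g_{-1}^{10}.   *)
Definition imu : C := Complex 0 1.
Definition liftv (X : V) : VC := map_mx (fun x : R => Complex x 0) X.
Definition ReV (Z : VC) : V := map_mx (@complex.Re R) Z.
Definition ImV (Z : VC) : V := map_mx (@complex.Im R) Z.

(* complex-multilinear extension of an encoded element to words in m (x) C *)
Fixpoint cev (s : seq VC) (P : Rep) : VC :=
  match s with
  | [::] => liftv (P [::])
  | Z :: s' => cev s' (shift (ReV Z) P) + imu *: cev s' (shift (ImV Z) P)
  end.

Definition brC (br : V -> V -> V) (Z W : VC) : VC :=
  liftv (br (ReV Z) (ReV W) - br (ImV Z) (ImV W))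
  + imu *: liftv (br (ReV Z) (ImV W) + br (ImV Z) (ReV W)).

Definition IC (I : V -> V) (Z : VC) : VC := liftv (I (ReV Z)) + imu *: liftv (I (ImV Z)).

Definition comp (deg : 'I_n -> nat) (k : nat) (Z : VC) : VC :=
  \row_j (if deg j == k then Z ord0 j else 0).

(* Z lies in n  (its g_{-1}(x)C component lies in g_{-1}^{10} = {X - iIX}) *)
Definition in_n (deg : 'I_n -> nat) (I : V -> V) (Z : VC) : Prop :=
  IC I (comp deg 1 Z) = imu *: comp deg 1 Z.

(* projection of m (x) C onto n along g_{-1}^{01} *)
Definition projn (deg : 'I_n -> nat) (I : V -> V) (Z : VC) : VC :=
  Z - comp deg 1 Z + 2^-1 *: (comp deg 1 Z - imu *: IC I (comp deg 1 Z)).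

Definition series_value (u : nat -> VC) (w : VC) : Prop :=
  exists K0, forall K, (K0 <= K)%N -> \sum_(k < K) u k = w.

(* Taylor coefficients c_k of x / (1 - e^{-x}) = sum_k c_k x^k *)
Definition acoef (m : nat) : C := (-1) ^+ m / (m.+1)`!%:R.
Fixpoint bcs (k : nat) : seq C :=
  match k with
  | 0 => [:: 1]
  | k'.+1 => let s := bcs k' in
      rcons s (- \sum_(m < k'.+1) acoef m.+1 * nth 0 s (k' - m))
  end.
Definition bcoef (k : nat) : C := nth 0 (bcs k) k.

(* F is the infinitesimal CR automorphism corresponding to (the encoded) X:  *)
(* at exp(Y), Y in n, the left-invariant value is W' = (Ad(exp(-Y)) X)_n,     *)
(* where the m(x)C-component of Ad(exp(-Y))X = sum_k (1/k!) [..[X,Y],..,Y];    *)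
(* in exponential coordinates this is (ad Y / (1 - e^{-ad Y})) W'.            *)
Definition inf_CR_aut (deg : 'I_n -> nat) (br : V -> V -> V) (I : V -> V)
    (P : Rep) (F : VC -> VC) : Prop :=
  forall Y, in_n deg I Y ->
    exists W,
      series_value (fun k => (k`!%:R)^-1 *: cev (nseq k Y) P) W /\
      series_value (fun k => bcoef k *: iter k (brC br Y) (projn deg I W)) (F Y).

Definition dil (deg : 'I_n -> nat) (t : C) (Z : VC) : VC :=
  \row_j (t ^+ deg j * Z ord0 j).

(* F is weighted homogeneous of weighted degree d on n: each coefficient of  *)
(* the coordinate vector field of weight k is weighted homogeneous of degree *)
(* d + k *)
Definition weighted_homogeneous (deg : 'I_n -> nat) (I : V -> V) (d : int)
    (F : VC -> VC) : Prop :=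
  forall t : C, t != 0 -> forall Y, in_n deg I Y ->
    F (dil deg t Y) = t ^ d *: dil deg t (F Y).

End Defs.

(* Main.v *)
Require Import Defs.
From HB Require Import structures.
From mathcomp Require Import all_boot all_order all_algebra.
From mathcomp Require Import complex ring zify.
Set Implicit Arguments. Unset Strict Implicit. Unset Printing Implicit Defensive.
Import Order.TTheory GRing.Theory Num.Theory.
Local Open Scope ring_scope.
Local Notation ReV := Defs.ReV.
Local Notation ImV := Defs.ImV.
Local Notation Re := complex.Re.
Local Notation Im := complex.Im.
Local Notation hom := Defs.hom.
Local Notation comp := Defs.comp.
Local Notation dil := Defs.dil.
Local Notation shift := Defs.shift.
Local Notation ev := Defs.ev.
Local Notation gdeg := Defs.gdeg.
Local Notation gle := Defs.gle.
Local Notation gneg := Defs.gneg.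
Local Notation g0 := Defs.g0.
Local Notation encD := Defs.encD.
Local Notation cev := Defs.cev.
Local Notation liftv := Defs.liftv.
Local Notation brC := Defs.brC.
Local Notation IC := Defs.IC.
Local Notation projn := Defs.projn.

Lemma series_fin (R : rcfType) (n : nat) (u : nat -> 'rV[R[i]]_n) K0 :
  (forall k, (K0 <= k)%N -> u k = 0) -> series_value u (\sum_(k < K0) u k).
Proof.
move=> h; exists K0 => K hK.
rewrite -(subnKC hK) big_split_ord /= [X in _ + X = _]big1 ?addr0 // => i _.
by apply: h; rewrite leq_addr.
Qed.

Section Main.
Variables (R : rcfType) (n l : nat) (deg : 'I_n -> nat).
Local Notation V := 'rV[R]_n.
Local Notation C := (R[i]).
Local Notation VC := 'rV[C]_n.
Hypothesis Hdeg : forall j, (1 <= deg j <= l)%N.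

Lemma liftv_lin (x : R) (A B : V) : liftv (x *: A + B) = (x%:C)%C *: liftv A + liftv B.
Proof. apply/rowP=> j; rewrite !mxE; simpc; congr (Complex _ _); ring. Qed.

Lemma liftv_add (A B : V) : liftv (A + B) = liftv A + liftv B.
Proof. apply/rowP=> j; rewrite !mxE; simpc; congr (Complex _ _); ring. Qed.

Lemma liftv_opp (A : V) : liftv (- A) = - liftv A.
Proof. apply/rowP=> j; rewrite !mxE; simpc; congr (Complex _ _); ring. Qed.

Lemma liftv0 : liftv (0 : V) = 0.
Proof. apply/rowP=> j; rewrite !mxE; done. Qed.

Lemma ReV_lin (c : C) (Z1 Z2 : VC) :
  ReV (c *: Z1 + Z2) = Re c *: ReV Z1 + ((- Im c) *: ImV Z1 + ReV Z2).
Proof.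
apply/rowP=> j; rewrite !mxE.
case: c (Z1 0 j) (Z2 0 j) => [a b] [c d] [e f]; simpc => /=; ring.
Qed.

Lemma ImV_lin (c : C) (Z1 Z2 : VC) :
  ImV (c *: Z1 + Z2) = Im c *: ReV Z1 + (Re c *: ImV Z1 + ImV Z2).
Proof.
apply/rowP=> j; rewrite !mxE.
case: c (Z1 0 j) (Z2 0 j) => [a b] [c d] [e f]; simpc => /=; ring.
Qed.

Definition cx (g : V -> VC) (Z : VC) : VC := g (ReV Z) + imu R *: g (ImV Z).

Definition rlin (g : V -> VC) := forall (x : R) A B, g (x *: A + B) = (x%:C)%C *: g A + g B.

Lemma cx_lin g : rlin g -> forall c Z1 Z2, cx g (c *: Z1 + Z2) = c *: cx g Z1 + cx g Z2.
Proof.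
move=> Hg c Z1 Z2; rewrite /cx ReV_lin ImV_lin !Hg.
apply/rowP=> j; rewrite !mxE.
move: (g (ReV Z1) 0 j) (g (ImV Z1) 0 j) (g (ReV Z2) 0 j) (g (ImV Z2) 0 j)
  => [? ?] [? ?] [? ?] [? ?].
case: c => a b; rewrite /imu; simpc.
rewrite /=; congr (Complex _ _); ring.
Qed.


Lemma lin_add (K : pzRingType) (M1 M2 : lmodType K) (f : M1 -> M2)
  (Hf : forall c x y, f (c *: x + y) = c *: f x + f y) x y : f (x + y) = f x + f y.
Proof. by rewrite -[x]scale1r Hf !scale1r. Qed.

Lemma lin0 (K : pzRingType) (M1 M2 : lmodType K) (f : M1 -> M2)
  (Hf : forall c x y, f (c *: x + y) = c *: f x + f y) : f 0 = 0.
Proof.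
have := lin_add Hf 0 0; rewrite addr0 -{1}[f 0]addr0 => /addrI; done.
Qed.

Lemma linZ (K : pzRingType) (M1 M2 : lmodType K) (f : M1 -> M2)
  (Hf : forall c x y, f (c *: x + y) = c *: f x + f y) c x : f (c *: x) = c *: f x.
Proof. by rewrite -[c *: x]addr0 Hf (lin0 Hf) addr0. Qed.

Lemma lin_sum (K : pzRingType) (M1 M2 : lmodType K) (f : M1 -> M2)
  (Hf : forall c x y, f (c *: x + y) = c *: f x + f y) (J : Type) (r : seq J) (P : pred J) F :
  f (\sum_(i <- r | P i) F i) = \sum_(i <- r | P i) f (F i).
Proof. exact: (big_morph f (lin_add Hf) (lin0 Hf)). Qed.

Definition compK (K : pzRingType) k (Z : 'rV[K]_n) : 'rV[K]_n :=
  \row_j (if deg j == k then Z 0 j else 0).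
Definition homK (K : pzRingType) k (Z : 'rV[K]_n) := forall j, deg j != k -> Z 0 j = 0.

Lemma decomp (K : pzRingType) (Z : 'rV[K]_n) : Z = \sum_(a < l) compK a.+1 Z.
Proof.
apply/rowP=> j; rewrite summxE.
have /andP[h1 h2] := Hdeg j.
have hl : ((deg j).-1 < l)%N by rewrite prednK.
rewrite (bigD1 (Ordinal hl)) //= big1 ?addr0.
  by rewrite mxE prednK // eqxx.
move=> i /eqP hi; rewrite mxE; case: eqP => // he; exfalso; apply: hi.
by apply: val_inj => /=; rewrite he.
Qed.

Lemma compK_hom (K : pzRingType) k (Z : 'rV[K]_n) : homK k (compK k Z).
Proof. by move=> j /negbTE h; rewrite mxE h. Qed.

Lemma compK_lin (K : pzRingType) k (c : K) (Z1 Z2 : 'rV[K]_n) :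
  compK k (c *: Z1 + Z2) = c *: compK k Z1 + compK k Z2.
Proof. by apply/rowP=> j; rewrite !mxE; case: ifP; rewrite ?mulr0 ?addr0. Qed.

Lemma hom_homK k (X : V) : hom deg k X <-> homK k X.
Proof.
split=> h j.
  by move=> hj; apply/eqP; apply: contraNT hj => /h ->.
by move=> hX; apply/eqP; apply: contraNT hX => /h ->.
Qed.

Lemma homK_lin (K : pzRingType) k (c : K) (Z1 Z2 : 'rV[K]_n) :
  homK k Z1 -> homK k Z2 -> homK k (c *: Z1 + Z2).
Proof. by move=> h1 h2 j hj; rewrite !mxE h1 // h2 // mulr0 addr0. Qed.

Lemma homK0 (K : pzRingType) k : homK k (0 : 'rV[K]_n).
Proof. by move=> j _; rewrite mxE. Qed.

Lemma homK_add (K : pzRingType) k (Z1 Z2 : 'rV[K]_n) :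
  homK k Z1 -> homK k Z2 -> homK k (Z1 + Z2).
Proof. by move=> h1 h2; rewrite -[Z1]scale1r; apply: homK_lin. Qed.

Lemma homK_opp (K : pzRingType) k (Z : 'rV[K]_n) : homK k Z -> homK k (- Z).
Proof. by move=> h j hj; rewrite mxE h // oppr0. Qed.

Lemma homKZ (K : pzRingType) k (c : K) (Z : 'rV[K]_n) : homK k Z -> homK k (c *: Z).
Proof. by move=> h; rewrite -[_ *: _]addr0; apply: homK_lin => //; apply: homK0. Qed.

Lemma ReV_comp k (Z : VC) : ReV (comp deg k Z) = compK k (ReV Z).
Proof. by apply/rowP=> j; rewrite !mxE; case: ifP. Qed.
Lemma ImV_comp k (Z : VC) : ImV (comp deg k Z) = compK k (ImV Z).
Proof. by apply/rowP=> j; rewrite !mxE; case: ifP. Qed.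

Lemma liftv_hom k (A : V) : homK k A -> homK k (liftv A).
Proof. by move=> h j hj; rewrite mxE h. Qed.

Lemma dil_lin (t c : C) (Z1 Z2 : VC) :
  dil deg t (c *: Z1 + Z2) = c *: dil deg t Z1 + dil deg t Z2.
Proof. apply/rowP=> j; rewrite !mxE; ring. Qed.

Lemma dil_hom (t : C) k (Z : VC) : homK k Z -> dil deg t Z = t ^+ k *: Z.
Proof.
move=> h; apply/rowP=> j; rewrite !mxE.
by case: (eqVneq (deg j) k) => [->|/h ->] //; rewrite !mulr0.
Qed.

Lemma dil_decomp (t : C) (Z : VC) : dil deg t Z = \sum_(a < l) t ^+ a.+1 *: comp deg a.+1 Z.
Proof.
rewrite {1}(decomp Z) (lin_sum (dil_lin t)).
by apply: eq_bigr => a _; rewrite (@dil_hom t a.+1) //; apply: compK_hom.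
Qed.


Variables (br : V -> V -> V) (I : V -> V).
Hypothesis HbrL : forall a X Y Z, br (a *: X + Y) Z = a *: br X Z + br Y Z.
Hypothesis HbrR : forall a X Y Z, br X (a *: Y + Z) = a *: br X Y + br X Z.
Hypothesis Hgr : forall a b X Y, hom deg a X -> hom deg b Y -> hom deg (a + b) (br X Y).
Hypothesis HIlin : forall a X Y, I (a *: X + Y) = a *: I X + I Y.
Hypothesis HI1 : forall X, hom deg 1 X -> hom deg 1 (I X).

Lemma foldl_lin s : forall a X Y, foldl br (a *: X + Y) s = a *: foldl br X s + foldl br Y s.
Proof. elim: s => [|Z s IH] a X Y //=; by rewrite HbrL IH. Qed.

Lemma gle_le i : forall m P, (m <= i)%N -> gle deg br I i m P <-> gle deg br I m m P.
Proof.
elim: i => [|i IH] m P hm.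
  by move: hm; rewrite leqn0 => /eqP ->.
move: hm; rewrite leq_eqVlt => /orP[/eqP -> //|hm].
by rewrite /= -ltnS hm; apply: IH; rewrite -ltnS.
Qed.

Lemma gdeg_nil_pos (k : nat) P : gdeg deg br I (Posz k) P -> P [::] = 0.
Proof.
case: k => [|k] /=.
  by case=> D [_ _ _ _ ->].
by rewrite ltnn; case.
Qed.

Lemma gdeg_lin j P : gdeg deg br I j P ->
  forall a Y Z s, P ((a *: Y + Z) :: s) = a *: P (Y :: s) + P (Z :: s).
Proof.
case: j => [[|k]|k] /=.
- by case=> D [HD _ _ _ ->] a Y Z s /=; rewrite /ev HD foldl_lin.
- by rewrite ltnn; case.
- by case=> X [_ ->] a Y Z s; rewrite /ev /= HbrR foldl_lin.
Qed.

Lemma gdeg_shift j P a Y : gdeg deg br I j P -> (0 < a)%N -> hom deg a Y ->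
  gdeg deg br I (j - a%:Z) (shift Y P).
Proof.
move=> hP ha hY.
case: j hP => [[|k]|k] /=.
- case=> D [_ HD _ _ ->].
  have -> : (0%:Z - a%:Z) = Negz a.-1 by rewrite NegzE prednK // sub0r.
  by rewrite /= prednK //; exists (D Y); split => //; apply: HD.
- rewrite ltnn; case=> _ _ /(_ a Y ha hY) h _.
  case: (leqP a k.+1) => hak; [rewrite hak in h | rewrite leqNgt hak in h].
    have hm : (k.+1 - a <= k)%N by lia.
    by rewrite subzn //=; apply/(gle_le _ hm).
  have -> : (k.+1%:Z - a%:Z) = Negz (a - k.+1).-1 by lia.
  by rewrite /= prednK // subn_gt0.
- case=> X [hX ->].
  have -> : (Negz k - a%:Z) = Negz (k + a) by lia.
  exists (br X Y); split => //.
  by rewrite -addSn; apply: Hgr.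
Qed.

Lemma gdeg_vanish s : forall j P, gdeg deg br I j P -> (j + l%:Z < (size s)%:Z) -> P s = 0.
Proof.
elim: s => [|Y s IH] j P hP hlt.
  case: j hP hlt => [k|k] hP hlt; rewrite /= in hlt; first by lia.
  case: hP => X [hX ->]; rewrite /ev /=.
  have hkl : (l < k.+1)%N by lia.
  apply/rowP=> i; rewrite mxE; apply/eqP; apply: contraTT hkl => /hX hi.
  by rewrite -leqNgt -hi; case/andP: (Hdeg i).
have Hf : forall (c : R) (x y : V), (fun Y => P (Y :: s)) (c *: x + y) =
   c *: (fun Y => P (Y :: s)) x + (fun Y => P (Y :: s)) y.
  by move=> c x y; apply: (gdeg_lin hP).
rewrite (decomp Y) (lin_sum Hf) big1 // => a _.
apply: (IH (j - a.+1%:Z) (shift (compK a.+1 Y) P)); last by move: hlt => /=; lia.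
apply: gdeg_shift => //; apply/hom_homK; apply: compK_hom.
Qed.


Local Notation im := (imu R).

Lemma cev_ext s : forall (P Q : Rep R n), (forall t, P t = Q t) -> cev s P = cev s Q.
Proof.
elim: s => [|Z s IH] P Q h /=; first by rewrite h.
by congr (_ + _ *: _); apply: IH => t; rewrite /Defs.shift h.
Qed.

Lemma cev_lin s : forall (x : R) (P Q : Rep R n),
  cev s (fun t => x *: P t + Q t) = (x%:C)%C *: cev s P + cev s Q.
Proof.
elim: s => [|Z s IH] x P Q /=; first by rewrite liftv_lin.
have -> := IH x (shift (ReV Z) P) (shift (ReV Z) Q).
have -> := IH x (shift (ImV Z) P) (shift (ImV Z) Q).
apply/rowP=> j; rewrite !mxE; ring.
Qed.

Lemma cev_zero s : forall (P : Rep R n), (forall t, size t = size s -> P t = 0) -> cev s P = 0.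
Proof.
elim: s => [|Z s IH] P h /=; first by rewrite h // liftv0.
by rewrite !IH ?scaler0 ?addr0 // => t ht; rewrite /Defs.shift h //= ht.
Qed.

Lemma cev_rlin j P s : gdeg deg br I j P -> rlin (fun A => cev s (shift A P)).
Proof.
move=> hP x A B; rewrite -cev_lin; apply: cev_ext => t.
by rewrite /Defs.shift (gdeg_lin hP).
Qed.

Lemma dil0 (t : C) : dil deg t 0 = 0.
Proof. exact: (lin0 (dil_lin t)). Qed.


Lemma cev_dil (t : C) (t0 : t != 0) s : forall j P, gdeg deg br I j P ->
  cev (map (dil deg t) s) P = t ^ j *: dil deg t (cev s P).
Proof.
elim: s => [|Z s IH] j P hP /=.
  case: j hP => [k|k] hP.
    by rewrite (gdeg_nil_pos hP) liftv0 dil0 scaler0.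
  case: hP => X [hX ->]; rewrite /ev /=.
  rewrite (@dil_hom t k.+1); last by apply: liftv_hom; apply/hom_homK.
  by change (t ^ Negz k) with ((t ^+ k.+1)^-1); rewrite scalerA mulVf ?scale1r // expf_neq0.
set g' := fun A => cev (map (dil deg t) s) (shift A P).
set g := fun A => cev s (shift A P).
change (cx g' (dil deg t Z) = t ^ j *: dil deg t (cx g Z)).
have hg' : rlin g' by apply: (cev_rlin _ hP).
have hg : rlin g by apply: (cev_rlin _ hP).
rewrite dil_decomp (lin_sum (cx_lin hg')) {2}(decomp Z) (lin_sum (cx_lin hg)).
rewrite (lin_sum (dil_lin t)) scaler_sumr; apply: eq_bigr => a _.
rewrite (linZ (cx_lin hg')) /cx ReV_comp ImV_comp /g' /g.
have hsh : forall A : V, homK a.+1 A ->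
   cev (map (dil deg t) s) (shift A P) = t ^ (j - a.+1%:Z) *: dil deg t (cev s (shift A P)).
  move=> A hA; apply: IH; apply: gdeg_shift => //; exact/hom_homK.
rewrite !hsh; try apply: compK_hom.
have -> : t ^ j = t ^+ a.+1 * t ^ (j - a.+1%:Z).
  by rewrite exprnP -expfzDr // addrC subrK.
rewrite (lin_add (dil_lin t)) (linZ (dil_lin t)) !scalerDr !scalerA.
apply/rowP=> i; rewrite !mxE; ring.
Qed.


Lemma brC_cx2 (Y Z : VC) :
  brC br Y Z = cx (fun A => liftv (br (ReV Y) A) + im *: liftv (br (ImV Y) A)) Z.
Proof.
rewrite /Defs.brC /cx; apply/rowP=> j; rewrite !mxE /imu; simpc; rewrite /=.
congr (Complex _ _); ring.
Qed.

Lemma brC_cx1 (Y Z : VC) :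
  brC br Y Z = cx (fun A => liftv (br A (ReV Z)) + im *: liftv (br A (ImV Z))) Y.
Proof.
rewrite /Defs.brC /cx; apply/rowP=> j; rewrite !mxE /imu; simpc; rewrite /=.
congr (Complex _ _); ring.
Qed.

Lemma brC_lin2 (Y : VC) c Z1 Z2 : brC br Y (c *: Z1 + Z2) = c *: brC br Y Z1 + brC br Y Z2.
Proof.
rewrite !brC_cx2; apply: cx_lin => x A B.
rewrite !HbrR !liftv_lin; apply/rowP=> j; rewrite !mxE; ring.
Qed.

Lemma brC_lin1 (Z : VC) c Y1 Y2 : brC br (c *: Y1 + Y2) Z = c *: brC br Y1 Z + brC br Y2 Z.
Proof.
rewrite !brC_cx1; apply: cx_lin => x A B.
rewrite !HbrL !liftv_lin; apply/rowP=> j; rewrite !mxE; ring.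
Qed.

Lemma ReV_hom k (Z : VC) : homK k Z -> homK k (ReV Z).
Proof. by move=> h j hj; rewrite mxE h. Qed.
Lemma ImV_hom k (Z : VC) : homK k Z -> homK k (ImV Z).
Proof. by move=> h j hj; rewrite mxE h. Qed.

Lemma br_hom a b (X Y : V) : homK a X -> homK b Y -> homK (a + b) (br X Y).
Proof. by move=> /hom_homK h1 /hom_homK h2; apply/hom_homK; apply: Hgr. Qed.

Lemma brC_hom a b (Y Z : VC) : homK a Y -> homK b Z -> homK (a + b) (brC br Y Z).
Proof.
move=> hY hZ; rewrite /Defs.brC.
apply: homK_add; last apply: homKZ; apply: liftv_hom.
  by apply: homK_add; [|apply: homK_opp]; apply: br_hom;
    by [apply: ReV_hom | apply: ImV_hom].
by apply: homK_add; apply: br_hom; by [apply: ReV_hom | apply: ImV_hom].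
Qed.

Lemma brC_dil (t : C) (Y Z : VC) : brC br (dil deg t Y) (dil deg t Z) = dil deg t (brC br Y Z).
Proof.
have e2 : dil deg t (brC br Y Z) = \sum_(a < l) \sum_(b < l)
   (t ^+ a.+1 * t ^+ b.+1) *: brC br (comp deg a.+1 Y) (comp deg b.+1 Z).
  rewrite {1}(decomp Y) (lin_sum (fun c x y => brC_lin1 Z c x y)) (lin_sum (dil_lin t)).
  apply: eq_bigr => a _.
  rewrite {1}(decomp Z) (lin_sum (brC_lin2 _)) (lin_sum (dil_lin t)).
  apply: eq_bigr => b _.
  rewrite (@dil_hom t (a.+1 + b.+1)) ?exprD //.
  by apply: brC_hom; apply: compK_hom.
rewrite e2 [dil deg t Y]dil_decomp (lin_sum (fun c x y => brC_lin1 _ c x y)).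
apply: eq_bigr => a _.
rewrite (linZ (fun c x y => brC_lin1 _ c x y)) [dil deg t Z]dil_decomp.
rewrite (lin_sum (brC_lin2 _)) scaler_sumr; apply: eq_bigr => b _.
by rewrite (linZ (brC_lin2 _)) scalerA.
Qed.


Definition geC m (Z : VC) := forall j, (deg j < m)%N -> Z 0 j = 0.

Lemma brC_ge m (Y Z : VC) : geC m Z -> geC m.+1 (brC br Y Z).
Proof.
move=> hZ.
have -> : brC br Y Z = \sum_(a < l) \sum_(b < l) brC br (comp deg a.+1 Y) (comp deg b.+1 Z).
  rewrite {1}(decomp Y) (lin_sum (fun c x y => brC_lin1 Z c x y)).
  by apply: eq_bigr => a _; rewrite {1}(decomp Z) (lin_sum (brC_lin2 _)).
apply: (big_ind (geC m.+1)); first by move=> j _; rewrite mxE.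
  by move=> x y hx hy j hj; rewrite mxE hx // hy // addr0.
move=> a _.
apply: (big_ind (geC m.+1)); first by move=> j _; rewrite mxE.
  by move=> x y hx hy j hj; rewrite mxE hx // hy // addr0.
move=> b _.
case: (ltnP b.+1 m) => hb.
  have -> : comp deg b.+1 Z = 0.
    apply/rowP=> j; rewrite !mxE; case: eqP => // he; apply: hZ; by rewrite he.
  by rewrite (lin0 (brC_lin2 _)) => j _; rewrite mxE.
have hh := @brC_hom a.+1 b.+1 _ _ (@compK_hom _ a.+1 Y) (@compK_hom _ b.+1 Z).
move=> j hj; apply: hh; apply: contraTneq hj => ->; rewrite -leqNgt.
by lia.
Qed.

Lemma iter_ge k (Y Z : VC) : geC k.+1 (iter k (brC br Y) Z).
Proof.
elim: k => [|k IH] /=.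
  move=> j hj; move: (Hdeg j) => /andP[h _]; by rewrite ltnS leqn0 in hj; rewrite (eqP hj) in h.
exact: brC_ge.
Qed.

Lemma iter_nil k (Y Z : VC) : (l <= k)%N -> iter k (brC br Y) Z = 0.
Proof.
move=> hk; apply/rowP=> j; rewrite mxE; apply: iter_ge.
by case/andP: (Hdeg j) => _ h; rewrite ltnS (leq_trans h hk).
Qed.

Lemma IC_rlin : rlin (fun A => liftv (I A)).
Proof. by move=> x A B; rewrite HIlin liftv_lin. Qed.

Lemma IC_lin c Z1 Z2 : IC I (c *: Z1 + Z2) = c *: IC I Z1 + IC I Z2.
Proof. exact: (cx_lin IC_rlin). Qed.

Lemma IC_hom1 (Z : VC) : homK 1 Z -> homK 1 (IC I Z).
Proof.
move=> h; apply: homK_add; last apply: homKZ; apply: liftv_hom; apply/hom_homK;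
  apply: HI1; apply/hom_homK; by [apply: ReV_hom | apply: ImV_hom].
Qed.

Lemma comp_dil1 (t : C) (Z : VC) : comp deg 1 (dil deg t Z) = t *: comp deg 1 Z.
Proof. by apply/rowP=> j; rewrite !mxE; case: eqP => [->|]; rewrite ?expr1 ?mulr0. Qed.

Lemma dilN (t : C) (Z : VC) : dil deg t (- Z) = - dil deg t Z.
Proof. by apply/rowP=> j; rewrite !mxE mulrN. Qed.

Lemma ICZ c (Z : VC) : IC I (c *: Z) = c *: IC I Z.
Proof. exact: (linZ IC_lin). Qed.
Lemma dil_add (t : C) (Z1 Z2 : VC) : dil deg t (Z1 + Z2) = dil deg t Z1 + dil deg t Z2.
Proof. by apply/rowP=> j; rewrite !mxE mulrDr. Qed.
Lemma dilZ (t : C) c (Z : VC) : dil deg t (c *: Z) = c *: dil deg t Z.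
Proof. by apply/rowP=> j; rewrite !mxE mulrCA. Qed.

Lemma projn_dil (t : C) (Z : VC) : projn deg I (dil deg t Z) = dil deg t (projn deg I Z).
Proof.
rewrite /Defs.projn comp_dil1 ICZ.
have hc : homK 1 (comp deg 1 Z) by apply: compK_hom.
have h1 : dil deg t (comp deg 1 Z) = t *: comp deg 1 Z.
  by rewrite (@dil_hom t 1) // expr1.
have h2 : dil deg t (IC I (comp deg 1 Z)) = t *: IC I (comp deg 1 Z).
  by rewrite (@dil_hom t 1) ?expr1 //; apply: IC_hom1.
rewrite !dil_add !dilN !dilZ dil_add dilN dilZ h1 h2.
move: (comp deg 1 Z) (IC I (comp deg 1 Z)) (dil deg t Z) => c1 w dZ.
apply/rowP=> j; rewrite !mxE; ring.
Qed.

Lemma projnZ c (Z : VC) : projn deg I (c *: Z) = c *: projn deg I Z.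
Proof.
rewrite /Defs.projn.
have -> : comp deg 1 (c *: Z) = c *: comp deg 1 Z by apply/rowP=> j; rewrite !mxE; case: ifP; rewrite ?mulr0.
rewrite ICZ; move: (comp deg 1 Z) (IC I (comp deg 1 Z)) => c1 w.
apply/rowP=> j; rewrite !mxE; ring.
Qed.


Lemma iter_dil (t : C) k (Y U : VC) c :
  iter k (brC br (dil deg t Y)) (c *: dil deg t U) = c *: dil deg t (iter k (brC br Y) U).
Proof.
elim: k => [|k IH] //=.
by rewrite IH (linZ (brC_lin2 _)) brC_dil.
Qed.

Lemma main_aux j (X : Rep R n) : gdeg deg br I j X ->
  exists F : VC -> VC, inf_CR_aut deg br I X F /\ weighted_homogeneous deg I j F.
Proof.
move=> hX.
pose K1 := (`|j|%N + l).+1.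
pose Wf (Y : VC) := \sum_(k < K1) (k`!%:R)^-1 *: cev (nseq k Y) X.
pose F (Y : VC) := \sum_(k < l) bcoef R k *: iter k (brC br Y) (projn deg I (Wf Y)).
exists F; split.
  move=> Y _; exists (Wf Y); split.
    apply: series_fin => k hk.
    rewrite cev_zero ?scaler0 // => s hs.
    apply: (gdeg_vanish hX); rewrite hs size_nseq; move: hk; rewrite /K1; lia.
  by apply: series_fin => k hk; rewrite iter_nil // scaler0.
move=> t ht Y _.
have hW : Wf (dil deg t Y) = t ^ j *: dil deg t (Wf Y).
  rewrite /Wf (lin_sum (dil_lin t)) scaler_sumr; apply: eq_bigr => k _.
  rewrite -map_nseq (cev_dil ht _ hX) dilZ !scalerA mulrC //.
rewrite /F hW projnZ projn_dil (lin_sum (dil_lin t)) scaler_sumr.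
apply: eq_bigr => k _.
by rewrite iter_dil dilZ !scalerA mulrC.
Qed.

End Main.

Theorem mainTheorem6 (R : rcfType) (n l : nat) (deg : 'I_n -> nat)
    (br : 'rV[R]_n -> 'rV[R]_n -> 'rV[R]_n) (I : 'rV[R]_n -> 'rV[R]_n)
    (j : int) (X : Rep R n) :
  nondeg_pseudo_complex_FGLA l deg br I ->
  gdeg deg br I j X ->
  exists F : 'rV[R[i]]_n -> 'rV[R[i]]_n,
    inf_CR_aut deg br I X F /\ weighted_homogeneous deg I j F.
Proof.
move=> [[Hdeg _] [HbrL HbrR _ _] Hgr _ [_ [HIlin HI1 _ _]]] hX.
by apply: (main_aux Hdeg HbrL HbrR Hgr HIlin HI1 hX).
Qed.
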